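(* Let $d>1$, let $n$ be a square-free positive integer and $r\mid n$. Let $\boldsymbol\tau=(\tau_1,\tau_2)\in\mathbb H^2$ and let $T_{\boldsymbol\tau}=\mathbb C^2/\Lambda_{\mathfrak b_r,\boldsymbol\tau}$ be the associated $(1,n)$-polarised abelian surface with real multiplication by $\mathcal O_{d^2}$. Let $E_1=\mathbb C\times\{0\}/(\Lambda_{\mathfrak b_r,\boldsymbol\tau}\cap(\mathbb C\times\{0\}))$ and $E_2=\{0\}\times\mathbb C/(\Lambda_{\mathfrak b_r,\boldsymbol\tau}\cap(\{0\}\times\mathbb C))$ be the elliptic curves in $T_{\boldsymbol\tau}$ generated by the eigenforms $du_1,du_2$. Then the restriction of the $(1,n)$-polarisation $\mathcal L$ of $T_{\boldsymbol\tau}$ satisfies $$\mathcal L|_{E_1}=\operatorname{lcm}(d,r)\cdot\mathcal O_{E_1}(0),\qquad \mathcal L|_{E_2}=\operatorname{lcm}(d,\tfrac nr)\cdot\mathcal O_{E_2}(0).$$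
   Context: $\mathcal O_{d^2}=\{(a_1,a_2)\in\mathbb Z^2:a_1\equiv a_2\bmod d\}\subset\mathbb Q\oplus\mathbb Q$ with componentwise multiplication; trace $\operatorname{tr}(a)=a_1+a_2$; $\mathcal O_{d^2}^\vee=\{x\in\mathbb Q^2:\operatorname{tr}(x\mathcal O_{d^2})\subset\mathbb Z\}=\langle\frac1d(1,-1),(0,1)\rangle_{\mathbb Z}$. For square-free $n$ and $r\mid n$, $\mathfrak b_r=\{(a_1,a_2)\in\mathbb Z^2:a_1\equiv a_2\bmod d,\ a_1\equiv0\bmod r,\ a_2\equiv0\bmod n/r\}$. On $\mathfrak b_r\oplus\mathcal O_{d^2}^\vee$ the trace pairing $\langle(a,b),(x,y)\rangle=\operatorname{tr}(ay-bx)=a_1y_1+a_2y_2-b_1x_1-b_2x_2$ is symplectic of type $(1,n)$. For $\boldsymbol\tau\in\mathbb H^2$, $\Lambda_{\mathfrak b_r,\boldsymbol\tau}=\{(a_1+b_1\tau_1,a_2+b_2\tau_2)^T: a\in\mathfrak b_r,b\in\mathcal O_{d^2}^\vee\}\subset\mathbb C^2$; $T_{\boldsymbol\tau}=\mathbb C^2/\Lambda_{\mathfrak b_r,\boldsymbol\tau}$ carries the polarisation $\mathcal L$ given by the trace pairing (transported to the lattice) and real multiplication by $\mathcal O_{d^2}$ acting componentwise; $du_1,du_2$ are the coordinate forms. ''$\mathcal L|_{E}=k\,\mathcal O_E(0)$'' means the restricted symplectic form on the rank-2 lattice of $E$ is $k$ times a unimodular one. *)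

(* Defs.v *)
From Stdlib Require Import Reals ZArith Znumtheory.
Open Scope R_scope.

(* C = R x R  (real part, imaginary part) *)
Definition Cpt := (R * R)%type.
Definition Czero : Cpt := (0, 0).
Definition Cofr (x : R) : Cpt := (x, 0).
Definition Cadd (z w : Cpt) : Cpt := (fst z + fst w, snd z + snd w).
Definition Cmul (z w : Cpt) : Cpt :=
  (fst z * fst w - snd z * snd w, fst z * snd w + snd z * fst w).
Definition Cscal (m : Z) (z : Cpt) : Cpt := (IZR m * fst z, IZR m * snd z).

Definition in_H (t : Cpt) : Prop := 0 < snd t.

Definition is_int (x : R) : Prop := exists z : Z, x = IZR z.

Definition squarefree (n : Z) : Prop :=
  forall k : Z, (1 < k)%Z -> ~ (k * k | n)%Z.

Definition in_O (d a1 a2 : Z) : Prop := (d | a1 - a2)%Z.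

Definition in_b (d n r a1 a2 : Z) : Prop :=
  in_O d a1 a2 /\ (r | a1)%Z /\ (Z.div n r | a2)%Z.

(* trace dual O_{d^2}^vee = {x : tr(x O) subset Z}  (x taken in R^2; it is
   automatically rational) *)
Definition in_Odual (d : Z) (x1 x2 : R) : Prop :=
  forall a1 a2 : Z, in_O d a1 a2 -> is_int (x1 * IZR a1 + x2 * IZR a2).

(* a parameter (a1,a2,b1,b2) of a point of b_r (+) O^vee *)
Definition param := (Z * Z * R * R)%type.
Definition pa1 (p : param) : Z := fst (fst (fst p)).
Definition pa2 (p : param) : Z := snd (fst (fst p)).
Definition pb1 (p : param) : R := snd (fst p).
Definition pb2 (p : param) : R := snd p.

Definition valid_param (d n r : Z) (p : param) : Prop :=
  in_b d n r (pa1 p) (pa2 p) /\ in_Odual d (pb1 p) (pb2 p).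

(* the map (a,b) |-> (a1 + b1 tau1, a2 + b2 tau2) onto Lambda_{b_r,tau} *)
Definition embed (t1 t2 : Cpt) (p : param) : Cpt * Cpt :=
  (Cadd (Cofr (IZR (pa1 p))) (Cmul (Cofr (pb1 p)) t1),
   Cadd (Cofr (IZR (pa2 p))) (Cmul (Cofr (pb2 p)) t2)).

Definition pairing (p q : param) : R :=
  IZR (pa1 p) * pb1 q + IZR (pa2 p) * pb2 q
  - pb1 p * IZR (pa1 q) - pb2 p * IZR (pa2 q).

Definition inj1 (w : Cpt) : Cpt * Cpt := (w, Czero).
Definition inj2 (w : Cpt) : Cpt * Cpt := (Czero, w).

Definition E_lattice (d n r : Z) (t1 t2 : Cpt) (inj : Cpt -> Cpt * Cpt)
  (w : Cpt) : Prop :=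
  exists p, valid_param d n r p /\ embed t1 t2 p = inj w.

Definition lattice_basis (L : Cpt -> Prop) (e f : Cpt) : Prop :=
  L e /\ L f /\
  (forall w, L w -> exists m k : Z, w = Cadd (Cscal m e) (Cscal k f)) /\
  (forall m k : Z, Cadd (Cscal m e) (Cscal k f) = Czero -> m = 0%Z /\ k = 0%Z).

(* L|_E = k O_E(0): the restriction of the (transported) trace pairing to
   the lattice of E is k times a unimodular form, i.e. its value on some
   Z-basis of the lattice equals k *)
Definition restr_is_k (d n r : Z) (t1 t2 : Cpt) (inj : Cpt -> Cpt * Cpt)
  (k : Z) : Prop :=
  exists (e f : Cpt) (pe pf : param),
    lattice_basis (E_lattice d n r t1 t2 inj) e f /\
    valid_param d n r pe /\ valid_param d n r pf /\
    embed t1 t2 pe = inj e /\ embed t1 t2 pf = inj f /\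
    pairing pe pf = IZR k.

(* Main.v *)
Require Import Defs.
From Stdlib Require Import Reals ZArith Znumtheory Lra Lia.
Open Scope R_scope.

Lemma peq (a b c e : R) : a = c -> b = e -> (a, b) = (c, e).
Proof. intros; subst; reflexivity. Qed.

Lemma int_scal (k : Z) (y : R) : 0 < y -> IZR k * y = 0 -> k = 0%Z.
Proof. intros Hy H. apply eq_IZR. apply Rmult_integral in H as [H|H]; lra. Qed.

Lemma E1 (d n r : Z) (t1 t2 : Cpt) (hd : (1 < d)%Z) (hr : (0 < r)%Z)
  (ht1 : in_H t1) (ht2 : in_H t2) :
  restr_is_k d n r t1 t2 inj1 (Z.lcm d r).
Proof.
  set (L := Z.lcm d r).
  assert (HL : L <> 0%Z) by (intro H; apply Z.lcm_eq_0 in H; lia).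
  destruct t1 as [x1 y1], t2 as [x2 y2]. unfold in_H in *; unfold pa1, pa2, pb1, pb2 in *; simpl in *.
  assert (vpe : valid_param d n r (L, 0%Z, 0, 0)).
  { split. split; [|split]; unfold pa1, pa2, pb1, pb2 in *; simpl.
    - unfold in_O; unfold pa1, pa2, pb1, pb2 in *; simpl; rewrite Z.sub_0_r. apply Z.divide_lcm_l.
    - apply Z.divide_lcm_r.
    - apply Z.divide_0_r.
    - intros a b _. exists 0%Z. unfold pa1, pa2, pb1, pb2 in *; simpl. ring. }
  assert (vpf : valid_param d n r (0%Z, 0%Z, 1, 0)).
  { split. split; [|split]; unfold pa1, pa2, pb1, pb2 in *; simpl.
    - unfold in_O; simpl; apply Z.divide_0_r.
    - apply Z.divide_0_r.
    - apply Z.divide_0_r.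
    - intros a b _. exists a. unfold pa1, pa2, pb1, pb2 in *; simpl. ring. }
  assert (epe : embed (x1, y1) (x2, y2) (L, 0%Z, 0, 0) = inj1 (IZR L, 0)).
  { unfold embed, inj1, Cadd, Cofr, Cmul, Czero; unfold pa1, pa2, pb1, pb2 in *; simpl.
    f_equal; apply peq; ring. }
  assert (epf : embed (x1, y1) (x2, y2) (0%Z, 0%Z, 1, 0) = inj1 (x1, y1)).
  { unfold embed, inj1, Cadd, Cofr, Cmul, Czero; unfold pa1, pa2, pb1, pb2 in *; simpl.
    f_equal; apply peq; ring. }
  exists (IZR L, 0), (x1, y1), (L, 0%Z, 0, 0), (0%Z, 0%Z, 1, 0).
  split; [|split; [exact vpe|split; [exact vpf|split; [exact epe|split; [exact epf|]]]]].
  2:{ unfold pairing; unfold pa1, pa2, pb1, pb2 in *; simpl. ring. }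
  split; [exists (L, 0%Z, 0, 0); auto|].
  split; [exists (0%Z, 0%Z, 1, 0); auto|].
  split.
  - intros w [[[[a1 a2] b1] b2] [[[Hd [Hr Hnr]] Hdual] He]].
    unfold pa1, pa2, pb1, pb2 in *; simpl in *.
    unfold embed, inj1, Cadd, Cofr, Cmul, Czero in He; unfold pa1, pa2, pb1, pb2 in *; simpl in He.
    injection He as Hw H1 H2.
    assert (b2 = 0) by (assert (b2 * y2 = 0) by lra; apply Rmult_integral in H as [?|?]; lra).
    subst b2.
    assert (a2 = 0%Z) by (apply eq_IZR; lra). subst a2.
    destruct (Hdual 1%Z 1%Z) as [z Hz]. { exists 0%Z. lia. }
    assert (HLa : (L | a1)%Z).
    { apply Z.lcm_least; auto. unfold in_O in Hd; rewrite Z.sub_0_r in Hd. exact Hd. }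
    destruct HLa as [q Hq].
    exists q, z. rewrite <- Hw. unfold Cadd, Cscal; unfold pa1, pa2, pb1, pb2 in *; simpl.
    apply peq; rewrite ?Hq, ?mult_IZR; idtac.
    all: replace b1 with (IZR z) by lra; ring.
  - intros m k H. unfold Cadd, Cscal, Czero in H; unfold pa1, pa2, pb1, pb2 in *; simpl in H.
    injection H as H1 H2.
    assert (k = 0%Z) by (apply (int_scal k y1); lra). subst k.
    split; [|reflexivity].
    assert (IZR (m * L) = 0) by (rewrite mult_IZR; lra).
    apply eq_IZR in H. apply Z.mul_eq_0 in H. lia.
Qed.
Lemma E2 (d n r : Z) (t1 t2 : Cpt) (hd : (1 < d)%Z) (hm : Z.div n r <> 0%Z)
  (ht1 : in_H t1) (ht2 : in_H t2) :
  restr_is_k d n r t1 t2 inj2 (Z.lcm d (Z.div n r)).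
Proof.
  set (L := Z.lcm d (Z.div n r)).
  assert (HL : L <> 0%Z) by (intro H; apply Z.lcm_eq_0 in H; lia).
  destruct t1 as [x1 y1], t2 as [x2 y2]. unfold in_H in *; unfold pa1, pa2, pb1, pb2 in *; simpl in *.
  assert (vpe : valid_param d n r (0%Z, L, 0, 0)).
  { split. split; [|split]; unfold pa1, pa2, pb1, pb2 in *; simpl.
    - unfold in_O; unfold pa1, pa2, pb1, pb2 in *; simpl; rewrite ?Z.sub_0_l. apply (proj2 (Z.divide_opp_r _ _)), Z.divide_lcm_l.
    - apply Z.divide_0_r.
    - apply Z.divide_lcm_r.
    - intros a b _. exists 0%Z. unfold pa1, pa2, pb1, pb2 in *; simpl. ring. }
  assert (vpf : valid_param d n r (0%Z, 0%Z, 0, 1)).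
  { split. split; [|split]; unfold pa1, pa2, pb1, pb2 in *; simpl.
    - unfold in_O; simpl; apply Z.divide_0_r.
    - apply Z.divide_0_r.
    - apply Z.divide_0_r.
    - intros a b _. exists b. unfold pa1, pa2, pb1, pb2 in *; simpl. ring. }
  assert (epe : embed (x1, y1) (x2, y2) (0%Z, L, 0, 0) = inj2 (IZR L, 0)).
  { unfold embed, inj2, Cadd, Cofr, Cmul, Czero; unfold pa1, pa2, pb1, pb2 in *; simpl.
    f_equal; apply peq; ring. }
  assert (epf : embed (x1, y1) (x2, y2) (0%Z, 0%Z, 0, 1) = inj2 (x2, y2)).
  { unfold embed, inj2, Cadd, Cofr, Cmul, Czero; unfold pa1, pa2, pb1, pb2 in *; simpl.
    f_equal; apply peq; ring. }
  exists (IZR L, 0), (x2, y2), (0%Z, L, 0, 0), (0%Z, 0%Z, 0, 1).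
  split; [|split; [exact vpe|split; [exact vpf|split; [exact epe|split; [exact epf|]]]]].
  2:{ unfold pairing; unfold pa1, pa2, pb1, pb2 in *; simpl. ring. }
  split; [exists (0%Z, L, 0, 0); auto|].
  split; [exists (0%Z, 0%Z, 0, 1); auto|].
  split.
  - intros w [[[[a1 a2] b1] b2] [[[Hd [Hr Hnr]] Hdual] He]].
    unfold pa1, pa2, pb1, pb2 in *; simpl in *.
    unfold embed, inj2, Cadd, Cofr, Cmul, Czero in He; unfold pa1, pa2, pb1, pb2 in *; simpl in He.
    injection He as H1 H2 Hw.
    assert (b1 = 0) by (assert (b1 * y1 = 0) by lra; apply Rmult_integral in H as [?|?]; lra).
    subst b1.
    assert (a1 = 0%Z) by (apply eq_IZR; lra). subst a1.
    destruct (Hdual 1%Z 1%Z) as [z Hz]. { exists 0%Z. lia. }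
    assert (HLa : (L | a2)%Z).
    { apply Z.lcm_least; auto. unfold in_O in Hd; rewrite ?Z.sub_0_l in Hd. apply (proj1 (Z.divide_opp_r _ _)) in Hd. exact Hd. }
    destruct HLa as [q Hq].
    exists q, z. rewrite <- Hw. unfold Cadd, Cscal; unfold pa1, pa2, pb1, pb2 in *; simpl.
    apply peq; rewrite ?Hq, ?mult_IZR; idtac.
    all: replace b2 with (IZR z) by lra; ring.
  - intros m k H. unfold Cadd, Cscal, Czero in H; unfold pa1, pa2, pb1, pb2 in *; simpl in H.
    injection H as H1 H2.
    assert (k = 0%Z) by (apply (int_scal k y2); lra). subst k.
    split; [|reflexivity].
    assert (IZR (m * L) = 0) by (rewrite mult_IZR; lra).
    apply eq_IZR in H. apply Z.mul_eq_0 in H. lia.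
Qed.

Theorem theorem3p1 (d n r : Z) (t1 t2 : Cpt)
  (hd : (1 < d)%Z) (hn : (0 < n)%Z) (hsf : squarefree n)
  (hr : (0 < r)%Z) (hrn : (r | n)%Z)
  (ht1 : in_H t1) (ht2 : in_H t2) :
  restr_is_k d n r t1 t2 inj1 (Z.lcm d r) /\
  restr_is_k d n r t1 t2 inj2 (Z.lcm d (Z.div n r)).
Proof.
  split.
  - apply E1; auto.
  - apply E2; auto.
    destruct hrn as [k Hk]. subst n. rewrite Z.div_mul by lia. nia.
Qed.
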